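(* Let $(X,\mathcal E_X)$ be a ballean. If $\operatorname{cof}_\star(\mathcal E_X)\le\operatorname{add}(\mathcal B_X)$, then $X$ is normal.
   Context: A ballean is a pair $(X,\mathcal E_X)$ where $X$ is a set and $\mathcal E_X$ is a family of subsets of $X\times X$ (called entourages) such that: each $E\in\mathcal E_X$ contains the diagonal $\Delta_X=\{(x,x):x\in X\}$; for any $E,F\in\mathcal E_X$ there is $D\in\mathcal E_X$ with $E\circ F^{-1}\subset D$, where $E\circ F=\{(x,z):\exists y\ (x,y)\in E,\ (y,z)\in F\}$ and $F^{-1}=\{(y,x):(x,y)\in F\}$; and $\bigcup\mathcal E_X=X\times X$. For $E\in\mathcal E_X$, $x\in X$, $A\subset X$ put $E[x]=\{y:(x,y)\in E\}$ and $E[A]=\bigcup_{a\in A}E[a]$. A set $B\subset X$ is bounded if $B\subset E[x]$ for some $E\in\mathcal E_X$, $x\in X$; $\mathcal B_X$ denotes the family of bounded sets (the bornology). Sets $A,B\subset X$ are asymptotically disjoint if $E[A]\cap E[B]\in\mathcal B_X$ for all $E\in\mathcal E_X$; $U\subset X$ is an asymptotic neighborhood of $A$ if $E[A]\setminus U\in\mathcal B_X$ for all $E\in\mathcal E_X$. $X$ is normal if any two asymptotically disjoint sets have disjoint asymptotic neighborhoods. For a partially ordered set $P$: $\operatorname{add}(P)$ is the smallest cardinality of a subset of $P$ having no upper bound in $P$, and $\operatorname{cof}(P)$ is the smallest cardinality of a cofinal subset of $P$; if $P$ has a largest element, put $\operatorname{add}(P)=\operatorname{cof}(P)=1$. $\mathcal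 B_X$ is ordered by inclusion. For $A\subset X$, $\operatorname{cof}_*(\mathcal E_X[A])$ is the smallest cardinality of a subfamily $\mathcal C\subset\mathcal E_X$ such that for every $E\in\mathcal E_X$ there is $C\in\mathcal C$ with $E[A]\setminus C[A]\in\mathcal B_X$; and $\operatorname{cof}_\star(\mathcal E_X)=\sup_{A\subset X}\operatorname{cof}_*(\mathcal E_X[A])$. *)

(* Defs.v *)
(* balleans on an arbitrary type X; subsets are predicates,
   entourages are binary relations X -> X -> Prop. Cardinal comparisons
   are expressed via injections between index types. *)

Definition rel (X : Type) := X -> X -> Prop.
Definition subset (X : Type) := X -> Prop.

Definition rcomp {X : Type} (e f : rel X) : rel X :=
  fun x z => exists y, e x y /\ f y z.
Definition rinv {X : Type} (f : rel X) : rel X := fun y x => f x y.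

Definition is_ballean (X : Type) (E : rel X -> Prop) : Prop :=
  (forall e, E e -> forall x, e x x) /\
  (forall e f, E e -> E f ->
     exists d, E d /\ forall x z, rcomp e (rinv f) x z -> d x z) /\
  (forall x y, exists e, E e /\ e x y).

Definition ballset {X : Type} (e : rel X) (A : subset X) : subset X :=
  fun y => exists a, A a /\ e a y.

Definition bounded {X : Type} (E : rel X -> Prop) (B : subset X) : Prop :=
  exists e x, E e /\ forall y, B y -> e x y.

Definition asymp_disjoint {X : Type} (E : rel X -> Prop) (A B : subset X) : Prop :=
  forall e, E e -> bounded E (fun y => ballset e A y /\ ballset e B y).

Definition asymp_nbhd {X : Type} (E : rel X -> Prop) (U A : subset X) : Prop :=
  forall e, E e -> bounded E (fun y => ballset e A y /\ ~ U y).

Definition normal_ballean {X : Type} (E : rel X -> Prop) : Prop :=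
  forall A B : subset X, asymp_disjoint E A B ->
    exists U V : subset X, asymp_nbhd E U A /\ asymp_nbhd E V B /\
      (forall x, U x -> V x -> False).

Definition card_le (I J : Type) : Prop :=
  exists f : I -> J, forall i i', f i = f i' -> i = i'.

Definition bornology_has_largest {X : Type} (E : rel X -> Prop) : Prop :=
  exists L, bounded E L /\ forall B, bounded E B -> forall y, B y -> L y.

Definition has_upper_bound {X : Type} (E : rel X -> Prop) {J : Type}
  (D : J -> subset X) : Prop :=
  exists U, bounded E U /\ forall j y, D j y -> U y.

(* |I| <= add(B_X): add(B_X) = 1 if B_X has a largest element, and otherwise
   the least cardinality of a subfamily of B_X without upper bound in B_X. *)
Definition card_le_add {X : Type} (E : rel X -> Prop) (I : Type) : Prop :=
  (bornology_has_largest E -> card_le I unit) /\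
  (~ bornology_has_largest E ->
     forall (J : Type) (D : J -> subset X),
       (forall j, bounded E (D j)) -> ~ has_upper_bound E D -> card_le I J).

(* C (indexed by I) witnesses cof_*(E_X[A]) <= |I|. *)
Definition cof_star_family {X : Type} (E : rel X -> Prop) (A : subset X)
  {I : Type} (C : I -> rel X) : Prop :=
  (forall i, E (C i)) /\
  (forall e, E e -> exists i,
     bounded E (fun y => ballset e A y /\ ~ ballset (C i) A y)).

(* cof_star(E_X) = sup_A cof_*(E_X[A]) <= add(B_X) *)
Definition cof_star_le_add {X : Type} (E : rel X -> Prop) : Prop :=
  forall A : subset X,
    exists (I : Type) (C : I -> rel X), cof_star_family E A C /\ card_le_add E I.

(* Main.v *)
From mathcomp Require Import ssreflect ssrfun ssrbool eqtype.
From mathcomp Require Import boolp wochoice.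
From Stdlib Require Import ProofIrrelevance Classical ClassicalEpsilon.
Require Import Defs.
Lemma wo_total (T : eqType) (R : ssrbool.rel T) : well_order R -> forall a b, R a b \/ R b a.
Proof.
move=> W a b; have := @wo_chainW T R predT.
have H : wo_chain R predT by move=> A _; exact: W.
move=> /(_ H a b isT isT) /orP[]; tauto.
Qed.

Lemma wo_anti (T : eqType) (R : ssrbool.rel T) : well_order R -> forall a b, R a b -> R b a -> a = b.
Proof.
move=> W a b h1 h2.
have H : wo_chain R predT by move=> A _; exact: W.
by apply: (@wo_chain_antisymmetric T R predT H a b isT isT); rewrite h1 h2.
Qed.

Lemma good_order (I : Type) : exists lt : I -> I -> Prop,
  (forall a b, a = b \/ lt a b \/ lt b a) /\ forall a, ~ card_le I {b | lt b a}.
Proof.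
have [R W] := well_ordering_principle {classic I}.
pose rlt (a b : I) := R a b /\ a <> b.
have tot : forall a b, a = b \/ rlt a b \/ rlt b a.
  move=> a b; case: (pselect (a = b)) => [->|nab]; first by left.
  case: (@wo_total _ R W a b) => h; right; [left|right]; split => //; by move=> e; apply: nab.
case: (pselect (exists a, card_le I {b | rlt b a})) => [ex|nex]; last first.
  exists rlt; split => // a ca; apply: nex; by exists a.
pose A0 : {pred {classic I}} := fun a => `[< card_le I {b | rlt b a} >].
have neA : nonempty A0.
  case: ex => a ca; exists a; rewrite /A0 /in_mem /=; exact/asboolP.
have [a0 [[inA lb] _]] := W A0 neA.
have := inA; rewrite /A0 /in_mem /= => /asboolP [f finj].
pose g i := proj1_sig (f i).
have ginj : forall i j, g i = g j -> i = j.
  move=> i j e; apply: finj; move: e; rewrite /g.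
  case: (f i) => x px; case: (f j) => y py /= e; subst y.
  by rewrite (proof_irrelevance _ px py).
exists (fun i j => rlt (g i) (g j)); split.
  move=> a b; case: (tot (g a) (g b)) => [e|h]; [left; exact: ginj|right; exact: h].
move=> a [h hinj].
have cga : card_le I {b | rlt b (g a)}.
  exists (fun i => exist _ (g (proj1_sig (h i))) (proj2_sig (h i))).
  move=> i j e; apply: hinj.
  have e' : g (proj1_sig (h i)) = g (proj1_sig (h j)) by inversion e.
  move: (ginj _ _ e'); case: (h i) => x px; case: (h j) => y py /= ee; subst y.
  by rewrite (proof_irrelevance _ px py).
have : R a0 (g a) by apply: lb; rewrite /A0 /in_mem /=; exact/asboolP.
have [r1 r2] := proj2_sig (f a).
move=> r3; apply: r2; exact: (@wo_anti _ R W _ _ r1 r3).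
Qed.

Section B.
Variable X : Type.
Variable E : rel X -> Prop.
Hypothesis HB : is_ballean X E.

Lemma ball_mono (e f : rel X) (A : subset X) :
  (forall x y, e x y -> f x y) -> forall y, ballset e A y -> ballset f A y.
Proof. intros h y [a [Aa ea]]. exists a. auto. Qed.

Lemma ent_join e f : E e -> E f -> exists d, E d /\
  (forall x y, e x y -> d x y) /\ (forall x y, f x y -> d x y).
Proof.
  destruct HB as [Hr [Hc _]]. intros Ee Ef.
  destruct (Hc e f Ee Ef) as [f' [Ef' hf']].
  destruct (Hc e f' Ee Ef') as [d [Ed hd]].
  exists d; split; [exact Ed|split].
  - intros x y exy. apply hd. exists y. split; [exact exy|]. unfold rinv. apply Hr. exact Ef'.
  - intros x y fxy. apply hd. exists x. split; [apply Hr; exact Ee|]. unfold rinv.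
    apply hf'. exists y. split; [apply Hr; exact Ee|]. exact fxy.
Qed.

Lemma ent_comp e f : E e -> E f -> exists d, E d /\
  (forall x y z, e x y -> f y z -> d x z).
Proof.
  destruct HB as [Hr [Hc _]]. intros Ee Ef.
  destruct (Hc f f Ef Ef) as [g [Eg hg]].
  destruct (Hc e g Ee Eg) as [d [Ed hd]].
  exists d; split; [exact Ed|].
  intros x y z exy fyz. apply hd. exists y. split; [exact exy|]. unfold rinv.
  apply hg. exists z. split; [apply Hr; exact Ef|]. exact fyz.
Qed.

Lemma bounded_sub (B1 B2 : subset X) : bounded E B2 -> (forall y, B1 y -> B2 y) -> bounded E B1.
Proof. intros [e [x [Ee h]]] s. exists e, x. split; auto. Qed.

Lemma bounded_union (B1 B2 : subset X) : bounded E B1 -> bounded E B2 ->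
  bounded E (fun y => B1 y \/ B2 y).
Proof.
  destruct HB as [Hr [Hc Hcov]].
  intros [e1 [x1 [E1 h1]]] [e2 [x2 [E2 h2]]].
  destruct (Hcov x1 x2) as [f [Ef fx]].
  destruct (ent_comp f e2 Ef E2) as [c [Ec hc]].
  destruct (ent_join e1 c E1 Ec) as [d [Ed [hd1 hd2]]].
  exists d, x1. split; [exact Ed|]. intros y [b|b]; auto.
  apply hd2. eapply hc; eauto.
Qed.
End B.

Lemma UB X (E : rel X -> Prop) I : card_le_add E I -> forall J (D : J -> subset X),
  (forall j, bounded E (D j)) -> ~ card_le I J -> has_upper_bound E D.
Proof.
  intros [h1 h2] J D bD nc.
  destruct (classic (bornology_has_largest E)) as [[L [bL hL]]|nl].
  - exists L; split; [exact bL|]. intros j y Dy. exact (hL _ (bD j) y Dy).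
  - apply NNPP; intro nu. apply nc. eapply h2; eauto.
Qed.

Lemma nbhd_gen X (E : rel X -> Prop) (HB : is_ballean X E) (A' B' S : subset X) (Ci e : rel X) (Bd : subset X) :
 (forall y, S y <-> A' y \/ B' y) -> E e -> E Ci -> asymp_disjoint E A' B' ->
 bounded E (fun y => ballset e S y /\ ~ ballset Ci S y) -> bounded E Bd ->
 bounded E (fun y => ballset e A' y /\ ~ (ballset Ci A' y /\ ~ Bd y)).
Proof.
  intros hS Ee ECi had b1 bBd.
  destruct (ent_join X E HB e Ci Ee ECi) as [d [Ed [hd1 hd2]]].
  pose proof (had d Ed) as bK.
  eapply (bounded_sub X E); [ apply (bounded_union X E HB); [ apply (bounded_union X E HB); [exact b1|exact bK]|exact bBd]|].
  intros y [ey h]. simpl.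
  destruct (classic (Bd y)) as [by_|nb]; [right; exact by_|left].
  assert (nA : ~ ballset Ci A' y) by (intro c; apply h; split; assumption).
  destruct (classic (ballset Ci B' y)) as [cB|nB].
  - right. split.
    + eapply ball_mono; [exact hd1|exact ey].
    + eapply ball_mono; [exact hd2|exact cB].
  - left. split.
    + destruct ey as [a [Aa ea]]. exists a. split; [apply hS; left; exact Aa|exact ea].
    + intros [a [Sa ca]]. apply hS in Sa. destruct Sa as [Aa|Ba].
      * apply nA. exists a; split; assumption.
      * apply nB. exists a; split; assumption.
Qed.

Theorem theorem1p2 (X : Type) (E : rel X -> Prop) :
  is_ballean X E -> cof_star_le_add E -> normal_ballean E.
Proof.
  intros HB hcof A B had.
  destruct (hcof (fun y => A y \/ B y)) as [I [C [[CE Ccof] hadd]]].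
  destruct (good_order I) as [lt [tot seg]].
  pose (P a b := fun y => (ballset (C a) A y /\ ballset (C b) B y) \/
                          (ballset (C b) A y /\ ballset (C a) B y)).
  assert (bP : forall a b, bounded E (P a b)).
  { intros a b. destruct (ent_join X E HB (C a) (C b) (CE a) (CE b)) as [d [Ed [h1 h2]]].
    eapply (bounded_sub X E); [exact (had d Ed)|].
    intros y [[u v]|[u v]]; split.
    - exact (ball_mono X _ _ _ h1 y u).
    - exact (ball_mono X _ _ _ h2 y v).
    - exact (ball_mono X _ _ _ h2 y u).
    - exact (ball_mono X _ _ _ h1 y v). }
  assert (exB : forall a, exists Bd, bounded E Bd /\ forall b, (lt b a \/ b = a) -> forall y, P a b y -> Bd y).
  { intros a.
    destruct (UB X E I hadd {b | lt b a} (fun b => P a (proj1_sig b)) (fun b => bP _ _) (seg a)) as [G [bG hG]].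
    exists (fun y => G y \/ P a a y). split.
    - apply (bounded_union X E HB); [exact bG|apply bP].
    - intros b [l|e] y p.
      + left. exact (hG (exist _ b l) y p).
      + subst b. right. exact p. }
  pose (Bf a := proj1_sig (constructive_indefinite_description _ (exB a))).
  assert (hBf : forall a, bounded E (Bf a) /\ forall b, (lt b a \/ b = a) -> forall y, P a b y -> Bf a y).
  { intro a. exact (proj2_sig (constructive_indefinite_description _ (exB a))). }
  exists (fun y => exists a, ballset (C a) A y /\ ~ Bf a y),
         (fun y => exists a, ballset (C a) B y /\ ~ Bf a y).
  split; [|split].
  - intros e Ee. destruct (Ccof e Ee) as [i bi].
    eapply (bounded_sub X E); [ apply (nbhd_gen X E HB A B (fun y => A y \/ B y) (C i) e (Bf i)); try tauto; eauto; apply hBf|].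
    intros y [ey nU]. split; [exact ey|]. intro c. apply nU. exists i. exact c.
  - intros e Ee. destruct (Ccof e Ee) as [i bi].
    assert (hadS : asymp_disjoint E B A).
    { intros d Ed. eapply (bounded_sub X E); [exact (had d Ed)|]. intros y [u v]; split; assumption. }
    eapply (bounded_sub X E); [ apply (nbhd_gen X E HB B A (fun y => A y \/ B y) (C i) e (Bf i)); try tauto; eauto; apply hBf|].
    intros y [ey nU]. split; [exact ey|]. intro c. apply nU. exists i. exact c.
  - intros y [a [ya na]] [b [yb nb]].
    destruct (tot a b) as [e|[l|l]].
    + subst b. apply na. apply (proj2 (hBf a) a (or_intror (Logic.eq_refl a))). left. split; assumption.
    + apply nb. apply (proj2 (hBf b) a (or_introl l)). right. split; assumption.
    + apply na. apply (proj2 (hBf a) b (or_introl l)). left. split; assumption.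
Qed.
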